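(* Let $A$ be an AUF algebra, $B$ a unital algebra, and $M$ an $A$-$B$ bimodule that is coherent and projective as a left $A$-module. Let $p\in B$ be an idempotent and $\psi\in\mathrm{SLF}(A)$. Let ${}^\psi\mathrm{Tr}_M:B\to\mathbb C$ be the right pseudotrace associated to $M$, and ${}^\psi\mathrm{Tr}_{Mp}:pBp\to\mathbb C$ the right pseudotrace associated to the $A$-$(pBp)$ bimodule $Mp$. Then ${}^\psi\mathrm{Tr}_{Mp}={}^\psi\mathrm{Tr}_M|_{pBp}$.
   Context: All algebras are associative $\mathbb C$-algebras, not necessarily unital. An idempotent is $e$ with $e^2=e$. An algebra $A$ is AUF if there is a family $(e_i)_{i\in\mathfrak I}$ of mutually orthogonal idempotents with $\dim e_iAe_j<\infty$ and $A=\sum_{i,j}e_iAe_j$. A left $A$-module is quasicoherent if $\xi\in A\xi$ for all $\xi$, coherent if moreover finitely generated. $\mathrm{SLF}(C)$ is the space of linear $\phi:C\to\mathbb C$ with $\phi(xy)=\phi(yx)$. $Mp=\{\xi p:\xi\in M\}$, a left $A$-submodule and direct summand of $M$, with right action of the unital algebra $pBp$. For an $A$-$B'$ bimodule $N$ ($B'$ unital) that is coherent and projective as a left $A$-module, a right coordinate system is an idempotent $e\in A$ with finitely many left $A$-module maps $\beta_j:Ae\to N$, $\check\beta^j:N\to Ae$ such that $\sum_j\beta_j\circ\check\beta^j=\mathrm{id}_N$ (one exists), and the right pseudotrace is ${}^\psi\mathrm{Tr}_N(y)=\sum_j\psi(\check\beta^j(\beta_j(e)y))$ for $y\in B'$,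 independent of the choice. *)

(* Defs.v *)
From HB Require Import structures.
From mathcomp Require Import all_boot all_order all_algebra.
From mathcomp Require Import reals.
From mathcomp Require Import complex.
Set Implicit Arguments. Unset Strict Implicit. Unset Printing Implicit Defensive.
Import Order.TTheory GRing.Theory Num.Theory.
Local Open Scope ring_scope.

Section Defs.
Variable (R : realType).
Local Notation C := (complex R).

Definition nu_alg (A : lmodType C) (mulA : A -> A -> A) : Prop :=
  (forall x y z, mulA x (mulA y z) = mulA (mulA x y) z) /\
  (forall (c : C) x y z, mulA (c *: x + y) z = c *: mulA x z + mulA y z) /\
  (forall (c : C) x y z, mulA z (c *: x + y) = c *: mulA z x + mulA z y).

Definition fin_dim_subspace (A : lmodType C) (V : A -> Prop) : Prop :=
  exists (n : nat) (v : 'I_n -> A),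
    forall x, V x <-> exists c : 'I_n -> C, x = \sum_(k < n) c k *: v k.

Definition is_AUF (A : lmodType C) (mulA : A -> A -> A) : Prop :=
  exists (I : Type) (e : I -> A),
    (forall i, mulA (e i) (e i) = e i) /\
    (forall i j, i <> j -> mulA (e i) (e j) = 0) /\
    (forall i j, fin_dim_subspace
                   (fun x => exists a, x = mulA (mulA (e i) a) (e j))) /\
    (forall a : A, exists (n : nat) (i j : 'I_n -> I) (x : 'I_n -> A),
        a = \sum_(k < n) mulA (mulA (e (i k)) (x k)) (e (j k))).

Definition SLF (A : lmodType C) (mulA : A -> A -> A) (psi : A -> C) : Prop :=
  (forall (c : C) x y, psi (c *: x + y) = c * psi x + psi y) /\
  (forall x y, psi (mulA x y) = psi (mulA y x)).

Definition lmod_act (A : lmodType C) (mulA : A -> A -> A)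
    (X : lmodType C) (act : A -> X -> X) : Prop :=
  (forall a b x, act (mulA a b) x = act a (act b x)) /\
  (forall (c : C) a b x, act (c *: a + b) x = c *: act a x + act b x) /\
  (forall (c : C) a x y, act a (c *: x + y) = c *: act a x + act a y).

Definition rmod_act (B : algType C) (X : lmodType C) (ract : X -> B -> X) : Prop :=
  (forall x, ract x 1 = x) /\
  (forall x b b', ract (ract x b) b' = ract x (b * b')) /\
  (forall (c : C) x b b', ract x (c *: b + b') = c *: ract x b + ract x b') /\
  (forall (c : C) x y b, ract (c *: x + y) b = c *: ract x b + ract y b).

Definition bimod (A : lmodType C) (mulA : A -> A -> A) (B : algType C)
    (X : lmodType C) (act : A -> X -> X) (ract : X -> B -> X) : Prop :=
  lmod_act mulA act /\ rmod_act ract /\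
  (forall a x b, act a (ract x b) = ract (act a x) b).

Definition Ahom (A : lmodType C) (X Y : lmodType C)
    (actX : A -> X -> X) (actY : A -> Y -> Y) (f : X -> Y) : Prop :=
  (forall (c : C) x y, f (c *: x + y) = c *: f x + f y) /\
  (forall a x, f (actX a x) = actY a (f x)).

Definition quasicoherent (A : lmodType C) (X : lmodType C)
    (act : A -> X -> X) : Prop :=
  forall x, exists a, act a x = x.

Definition fin_gen (A : lmodType C) (X : lmodType C) (act : A -> X -> X) : Prop :=
  exists (n : nat) (g : 'I_n -> X), forall x, exists (a : 'I_n -> A) (c : 'I_n -> C),
    x = \sum_(k < n) (act (a k) (g k) + c k *: g k).

Definition coherent (A : lmodType C) (X : lmodType C) (act : A -> X -> X) : Prop :=
  quasicoherent act /\ fin_gen act.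

Definition projective (A : lmodType C) (mulA : A -> A -> A)
    (X : lmodType C) (act : A -> X -> X) : Prop :=
  forall (Y Z : lmodType C) (actY : A -> Y -> Y) (actZ : A -> Z -> Z)
         (f : Y -> Z) (g : X -> Z),
    lmod_act mulA actY -> lmod_act mulA actZ ->
    Ahom actY actZ f -> (forall z, exists y, f y = z) -> Ahom act actZ g ->
    exists h : X -> Y, Ahom act actY h /\ forall x, f (h x) = g x.

Definition inAe (A : lmodType C) (mulA : A -> A -> A) (e x : A) : Prop :=
  exists a, x = mulA a e.

(* A right coordinate system of a left A-submodule N of M, N given by its
   carrier predicate inN: an idempotent e, and left A-module maps
   bet_j : Ae -> N, chk_j : N -> Ae (j < n), with sum_j bet_j o chk_j = id_N.
   The maps are represented by functions on the ambient spaces A and M; only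
   their restrictions to Ae resp. N matter. *)
Definition rcoord (A : lmodType C) (mulA : A -> A -> A)
    (M : lmodType C) (act : A -> M -> M) (inN : M -> Prop)
    (e : A) (n : nat) (bet : 'I_n -> A -> M) (chk : 'I_n -> M -> A) : Prop :=
  mulA e e = e /\
  (forall j x, inAe mulA e x -> inN (bet j x)) /\
  (forall j (c : C) x y, inAe mulA e x -> inAe mulA e y ->
      bet j (c *: x + y) = c *: bet j x + bet j y) /\
  (forall j a x, inAe mulA e x -> bet j (mulA a x) = act a (bet j x)) /\
  (forall j m, inN m -> inAe mulA e (chk j m)) /\
  (forall j (c : C) m m', inN m -> inN m' ->
      chk j (c *: m + m') = c *: chk j m + chk j m') /\
  (forall j a m, inN m -> chk j (act a m) = mulA a (chk j m)) /\
  (forall m, inN m -> \sum_(j < n) bet j (chk j m) = m).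

Definition rpseudotrace (A : lmodType C) (B : algType C) (M : lmodType C)
    (ract : M -> B -> M) (psi : A -> C)
    (e : A) (n : nat) (bet : 'I_n -> A -> M) (chk : 'I_n -> M -> A) (y : B) : C :=
  \sum_(j < n) psi (chk j (ract (bet j e) y)).

Definition inMp (B : algType C) (M : lmodType C) (ract : M -> B -> M) (p : B)
    (m : M) : Prop := exists m', m = ract m' p.

Definition in_pBp (B : algType C) (p y : B) : Prop := exists b, y = p * b * p.

End Defs.

(* Main.v *)
Require Import Defs.
From HB Require Import structures.
From mathcomp Require Import all_boot all_order all_algebra.
From mathcomp Require Import reals.
From mathcomp Require Import complex.
Import GRing.Theory.
Local Open Scope ring_scope.

Lemma sum_morphP (X Y : zmodType) (P : X -> Prop) (f : X -> Y) :
  P 0 -> (forall x y, P x -> P y -> P (x + y)) -> f 0 = 0 ->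
  (forall x y, P x -> P y -> f (x + y) = f x + f y) ->
  forall n (F : 'I_n -> X), (forall i, P (F i)) ->
  f (\sum_(i < n) F i) = \sum_(i < n) f (F i).
Proof.
move=> P0 PD f0 fD n F PF.
have : P (\sum_(i < n) F i) /\ f (\sum_(i < n) F i) = \sum_(i < n) f (F i).
  apply: (big_ind2 (fun a b => P a /\ f a = b)).
  - by split.
  - move=> a1 a2 b1 b2 [h1 <-] [h2 <-]; split; [exact: PD | exact: fD].
  - by move=> i _; split.
by case.
Qed.

Lemma lin0 (K : pzRingType) (X Y : lmodType K) (P : X -> Prop) (f : X -> Y) :
  P 0 -> (forall c x y, P x -> P y -> f (c *: x + y) = c *: f x + f y) -> f 0 = 0.
Proof.
move=> P0 fl; have := fl (-1) 0 0 P0 P0.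
by rewrite scaler0 addr0 scaleN1r addNr.
Qed.

Lemma linD (K : pzRingType) (X Y : lmodType K) (P : X -> Prop) (f : X -> Y) :
  (forall c x y, P x -> P y -> f (c *: x + y) = c *: f x + f y) ->
  forall x y, P x -> P y -> f (x + y) = f x + f y.
Proof. by move=> fl x y Px Py; have := fl 1 x y Px Py; rewrite !scale1r. Qed.

Theorem proposition8p8 (R : realType)
    (A : lmodType (complex R)) (mulA : A -> A -> A)
    (B : algType (complex R))
    (M : lmodType (complex R)) (act : A -> M -> M) (ract : M -> B -> M)
    (p : B) (psi : A -> complex R) :
  nu_alg mulA -> is_AUF mulA ->
  bimod mulA act ract ->
  coherent act -> projective mulA act ->
  p * p = p ->
  SLF mulA psi ->
  forall (e : A) (n : nat) (bet : 'I_n -> A -> M) (chk : 'I_n -> M -> A),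
  rcoord mulA act (fun _ => True) e bet chk ->
  forall (e' : A) (n' : nat) (bet' : 'I_n' -> A -> M) (chk' : 'I_n' -> M -> A),
  rcoord mulA act (inMp ract p) e' bet' chk' ->
  forall y : B, in_pBp p y ->
    rpseudotrace ract psi e' bet' chk' y = rpseudotrace ract psi e bet chk y.
Proof.
move=> [hass _] _ [_ [[hr1 [hr2 [hr3 hr4]]] hcomm]] _ _ hp [hpsiL hpsiS].
move=> e n bet chk [he [hbIn [hbLin [hbAct [hcIn [hcLin [hcAct hsum]]]]]]].
move=> e' n' bet' chk' [he' [hbIn' [hbLin' [hbAct' [hcIn' [hcLin' [hcAct' hsum']]]]]]].
move=> y0 [b ->]; rewrite /rpseudotrace.
set y := p * b * p.
have inMpY : forall m, inMp ract p (ract m y).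
  by move=> m; exists (ract m (p * b)); rewrite hr2.
have ract0 : forall b0, ract 0 b0 = 0.
  by move=> b0; apply: (@lin0 _ M M (fun _ => True) (fun m => ract m b0)) => // c x z _ _; rewrite hr4.
have ractD : forall b0 x z, ract (x + z) b0 = ract x b0 + ract z b0.
  by move=> b0 x z; apply: (@linD _ M M (fun _ => True) (fun m => ract m b0)) => // c x' z' _ _; rewrite hr4.
have inMp0 : inMp ract p 0 by exists 0; rewrite ract0.
have inMpD : forall x z, inMp ract p x -> inMp ract p z -> inMp ract p (x + z).
  by move=> x z [x1 ->] [z1 ->]; exists (x1 + z1); rewrite ractD.
have psi0 : psi 0 = 0.
  by have := hpsiL (-1) 0 0; rewrite scaler0 addr0 mulN1r addNr.
have psiD : forall x z, psi (x + z) = psi x + psi z.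
  by move=> x z; have := hpsiL 1 x z; rewrite scale1r mul1r.
have Eq1 : forall j, psi (chk' j (ract (bet' j e') y)) =
    \sum_(i < n) psi (chk' j (ract (bet i (chk i (bet' j e'))) y)).
  move=> j; rewrite -{1}(hsum (bet' j e') I).
  rewrite (@sum_morphP M M (fun _ => True) (fun m => ract m y)) //.
  rewrite (@sum_morphP M A (inMp ract p) (chk' j)) //.
  - by rewrite (@sum_morphP A _ (fun _ => True) psi).
  - by apply: (@lin0 _ M A (inMp ract p)) => // c x z hx hz; rewrite hcLin'.
  - by apply: (@linD _ M A (inMp ract p)) => c x z hx hz; rewrite hcLin'.
have Eq2 : forall i, psi (chk i (ract (bet i e) y)) =
    \sum_(j < n') psi (chk i (bet' j (chk' j (ract (bet i e) y)))).
  move=> i; rewrite -{1}(hsum' _ (inMpY (bet i e))).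
  rewrite (@sum_morphP M A (fun _ => True) (chk i)) //.
  - by rewrite (@sum_morphP A _ (fun _ => True) psi).
  - by apply: (@lin0 _ M A (fun _ => True)) => // c x z hx hz; rewrite hcLin.
  - by apply: (@linD _ M A (fun _ => True)) => c x z hx hz; rewrite hcLin.
rewrite (eq_bigr _ (fun j _ => Eq1 j)) (eq_bigr _ (fun i _ => Eq2 i)) exchange_big.
apply: eq_bigr => i _; apply: eq_bigr => j _.
have [a xa] : inAe mulA e' (chk' j (ract (bet i e) y)) by apply: hcIn'; apply: inMpY.
have xe : mulA (chk' j (ract (bet i e) y)) e' = chk' j (ract (bet i e) y).
  by rewrite xa -hass he'.
have -> : bet' j (chk' j (ract (bet i e) y)) =
    act (chk' j (ract (bet i e) y)) (bet' j e').
  by rewrite -hbAct' ?xe //; exists e'.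
rewrite hcAct // hpsiS.
have [a' ua] : inAe mulA e (chk i (bet' j e')) by apply: hcIn.
have ue : mulA (chk i (bet' j e')) e = chk i (bet' j e') by rewrite ua -hass he.
rewrite -hcAct'; last by apply: inMpY.
by rewrite hcomm -hbAct ?ue //; exists e.
Qed.
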